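(* In Model B below, assume $l\mid d$, $l\to\infty$ and $lp\to0$ as $d\to\infty$. Then for the $c$-segmentation rule with $c=d/l$, $$\mathbb{P}(w\text{ is misclassified})\to0\quad\text{as }d\to\infty.$$
   Context: Segmentation rule. Let $d,c$ be positive integers with $c\mid d$. For $x\in\mathbb{R}^d$ and $1\le j\le c$ let $x_j\in\mathbb{R}^{d/c}$ denote its $j$-th block $(x_{(j-1)d/c+1},\dots,x_{jd/c})$, so that $x=x_1\circ\cdots\circ x_c$ (concatenation). Given dictionary words $w^1,\dots,w^K\in\mathbb{R}^d$ ($w^k$ representing class $k$) and a test word $w\in\mathbb{R}^d$, for each $j$ let $U_j\in\{1,\dots,K\}$ be an index $k$ minimizing the Euclidean distance $\|w_j-w^k_j\|$ in $\mathbb{R}^{d/c}$, chosen uniformly at random among all minimizers (independently of everything else). The $c$-segmentation rule assigns to $w$ the class $\chi(w)\in\operatorname{argmax}_k\#\{j:U_j=k\}$, chosen uniformly at random among all maximizers. The case $c=1$ is the Euclidean (nearest-neighbour) rule and $c=d$ is coordinate-by-coordinate comparison. $w$ is classified correctly if $\chi(w)$ equals its true class, misclassified otherwise. Probabilities are over all random objects including tie-breaks. Model B. Let $d\ge1$, an integer $l\ge1$, $N>0$ and $p\in(0,1)$ be given (the last three may depend on $d$). Let $m_1=0\in\mathbb{R}^d$ and let $m_2\in\mathbb{R}^d$ have $(m_2)_i=1$ if $i\equiv1\pmod l$ and $(m_2)_i=0$ otherwise. Let $Y^{(0)},Y^{(1)},Y^{(2)}$ be independent random vectors in $\mathbb{R}^d$,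 each with i.i.d. coordinates satisfying $\mathbb{P}(Y_i=N)=p$, $\mathbb{P}(Y_i=0)=1-p$. There are $K=2$ classes; the dictionary words are $w^1=m_1+Y^{(1)}$ (class 1) and $w^2=m_2+Y^{(2)}$ (class 2), and the test word is $w=m_1+Y^{(0)}$ (true class 1). *)

(* Defs.v *)
From HB Require Import structures.
From mathcomp Require Import all_boot.
From Stdlib Require Import Reals.
Set Implicit Arguments. Unset Strict Implicit. Unset Printing Implicit Defensive.

Lemma Rplus_assoc' : associative Rplus.
Proof. by move=> x y z; rewrite Rplus_assoc. Qed.
Lemma Rmult_assoc' : associative Rmult.
Proof. by move=> x y z; rewrite Rmult_assoc. Qed.
HB.instance Definition _ := Monoid.isComLaw.Build R 0%R Rplus Rplus_assoc' Rplus_comm Rplus_0_l.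
HB.instance Definition _ := Monoid.isComLaw.Build R 1%R Rmult Rmult_assoc' Rmult_comm Rmult_1_l.

Definition Rleb (a b : R) : bool := if Rle_dec a b then true else false.

(* Euclidean distance between the j-th blocks (0-indexed, blocks of length
   d/c) of x and y in R^d; coordinate i (0-indexed) lies in block i / (d/c). *)
Definition block_dist (d c : nat) (x y : 'I_d -> R) (j : nat) : R :=
  sqrt (\big[Rplus/0%R]_(i : 'I_d | i %/ (d %/ c) == j) ((x i - y i) ^ 2)%R).

Definition block_minimizers (d c K : nat) (ws : 'I_K -> 'I_d -> R)
    (w : 'I_d -> R) (j : nat) : {set 'I_K} :=
  [set k | [forall k', Rleb (block_dist c w (ws k) j) (block_dist c w (ws k') j)]].

(* probability that the vector of block votes (U_1..U_c) equals u:
   each U_j is uniform among the minimizers, independently *)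
Definition prob_U (d c K : nat) (ws : 'I_K -> 'I_d -> R) (w : 'I_d -> R)
    (u : {ffun 'I_c -> 'I_K}) : R :=
  \big[Rmult/1%R]_(j < c)
     (if u j \in block_minimizers c ws w j
      then Rinv (INR #|block_minimizers c ws w j|) else 0)%R.

Definition votes (c K : nat) (u : {ffun 'I_c -> 'I_K}) (k : 'I_K) : nat :=
  #|[set j | u j == k]|.

Definition vote_maximizers (c K : nat) (u : {ffun 'I_c -> 'I_K}) : {set 'I_K} :=
  [set k | [forall k', votes u k' <= votes u k]].

(* probability that chi(w) = k given the block votes u (uniform tie-break) *)
Definition prob_chi_given (c K : nat) (u : {ffun 'I_c -> 'I_K}) (k : 'I_K) : R :=
  if k \in vote_maximizers u then Rinv (INR #|vote_maximizers u|) else 0%R.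

(* probability that the c-segmentation rule misclassifies w, whose true class
   is k0, given dictionary words ws (over the tie-break randomness only) *)
Definition seg_misclass_prob (d c K : nat) (ws : 'I_K -> 'I_d -> R)
    (w : 'I_d -> R) (k0 : 'I_K) : R :=
  \big[Rplus/0%R]_(u : {ffun 'I_c -> 'I_K})
     (prob_U ws w u * \big[Rplus/0%R]_(k | k != k0) prob_chi_given u k)%R.

(* Y encoded by a boolean vector: Y_i = N if b i, 0 otherwise *)
Definition Yvec (d : nat) (N : R) (b : {ffun 'I_d -> bool}) : 'I_d -> R :=
  fun i => if b i then N else 0%R.

Definition Yweight (d : nat) (p : R) (b : {ffun 'I_d -> bool}) : R :=
  \big[Rmult/1%R]_(i : 'I_d) (if b i then p else 1 - p)%R.

(* m_2: (m_2)_i = 1 iff i = 1 mod l for 1-indexed i, i.e. i0 mod l = 0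
   for the 0-indexed coordinate i0 *)
Definition m2 (d l : nat) : 'I_d -> R :=
  fun i => if i %% l == 0 then 1%R else 0%R.

Definition class1 : 'I_2 := ord0.
Definition class2 : 'I_2 := ord_max.

Definition modelB_misclass_prob (d l : nat) (N p : R) : R :=
  \big[Rplus/0%R]_(b0 : {ffun 'I_d -> bool})
  \big[Rplus/0%R]_(b1 : {ffun 'I_d -> bool})
  \big[Rplus/0%R]_(b2 : {ffun 'I_d -> bool})
    (Yweight p b0 * Yweight p b1 * Yweight p b2 *
     seg_misclass_prob (d %/ l)
       (fun k : 'I_2 => if k == class1 then Yvec N b1
                        else (fun i => m2 l i + Yvec N b2 i)%R)
       (Yvec N b0) class1)%R.

(* Main.v *)
Require Import Defs.
From HB Require Import structures.
From mathcomp Require Import all_boot.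
From Stdlib Require Import Reals Lra Lia.
From mathcomp Require Import zify.

Lemma Rmult0m : left_zero 0%R Rmult. Proof. move=> x; exact: Rmult_0_l. Qed.
Lemma Rmultm0 : right_zero 0%R Rmult. Proof. move=> x; exact: Rmult_0_r. Qed.
HB.instance Definition _ := Monoid.isMulLaw.Build R 0%R Rmult Rmult0m Rmultm0.
Lemma RmulDl : left_distributive Rmult Rplus. Proof. move=> x y z; exact: Rmult_plus_distr_r. Qed.
Lemma RmulDr : right_distributive Rmult Rplus. Proof. move=> x y z; exact: Rmult_plus_distr_l. Qed.
HB.instance Definition _ := Monoid.isAddLaw.Build R Rmult Rplus RmulDl RmulDr.

Lemma Rsum_le (I : Type) (r : seq I) (P : pred I) (F G : I -> R) :
  (forall i, P i -> (F i <= G i)%R) ->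
  (\big[Rplus/0%R]_(i <- r | P i) F i <= \big[Rplus/0%R]_(i <- r | P i) G i)%R.
Proof.
move=> H; apply: (big_ind2 (fun x y => (x <= y)%R)); first lra.
  by move=> *; lra.
exact: H.
Qed.

Lemma Rsum_ge0 (I : Type) (r : seq I) (P : pred I) (F : I -> R) :
  (forall i, P i -> (0 <= F i)%R) ->
  (0 <= \big[Rplus/0%R]_(i <- r | P i) F i)%R.
Proof.
move=> H; apply: (big_ind (fun x => (0 <= x)%R)); first lra.
  by move=> *; lra.
exact: H.
Qed.

Lemma Rprod_ge0 (I : Type) (r : seq I) (P : pred I) (F : I -> R) :
  (forall i, P i -> (0 <= F i)%R) ->
  (0 <= \big[Rmult/1%R]_(i <- r | P i) F i)%R.
Proof.
move=> H; apply: (big_ind (fun x => (0 <= x)%R)); first lra.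
  by move=> x y hx hy; apply: Rmult_le_pos.
exact: H.
Qed.

Lemma Rprod_le1 (I : Type) (r : seq I) (P : pred I) (F : I -> R) :
  (forall i, P i -> (0 <= F i <= 1)%R) ->
  (\big[Rmult/1%R]_(i <- r | P i) F i <= 1)%R.
Proof.
move=> H.
suff: (0 <= \big[Rmult/1%R]_(i <- r | P i) F i <= 1)%R by case.
apply: (big_ind (fun x => (0 <= x <= 1)%R)); first lra.
  move=> x y hx hy; split; first by apply: Rmult_le_pos; lra.
  have -> : 1%R = (1 * 1)%R by ring.
  by apply: Rmult_le_compat; lra.
exact: H.
Qed.

Lemma iter_Rplus n x : iter n (Rplus x) 0%R = (INR n * x)%R.
Proof.
elim: n => [|n IH]; first by rewrite /=; ring.
rewrite iterS IH S_INR; ring.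
Qed.

Lemma Rsum_const_in (I : finType) (A : {pred I}) x :
  \big[Rplus/0%R]_(i in A) x = (INR #|A| * x)%R.
Proof. by rewrite big_const iter_Rplus. Qed.

Lemma Rinv_INR_ge0 n : (0 <= / INR n)%R.
Proof.
case: n => [|n]; first by rewrite /= Rinv_0; lra.
apply/Rlt_le/Rinv_0_lt_compat/lt_0_INR; lia.
Qed.

Lemma Rinv_INR_le1 n : (0 < n)%N -> (/ INR n <= 1)%R.
Proof.
case: n => [//|n] _.
rewrite -Rinv_1; apply: Rinv_le_contravar; first lra.
rewrite S_INR; have := pos_INR n; lra.
Qed.

Definition ind {d : nat} (b : {ffun 'I_d -> bool}) (i : 'I_d) : R := if b i then 1%R else 0%R.

Section Ew.
Variables (d : nat) (p : R).
Hypothesis hp : (0 <= p <= 1)%R.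


Lemma W_ge0 (b : {ffun 'I_d -> bool}) : (0 <= Yweight p b)%R.
Proof. apply: Rprod_ge0 => i _; case: (b i); lra. Qed.

Lemma sumW : \big[Rplus/0%R]_(b : {ffun 'I_d -> bool}) Yweight p b = 1%R.
Proof.
rewrite /Yweight.
rewrite -(bigA_distr_bigA (fun (i : 'I_d) (x : bool) => if x then p else (1 - p)%R)).
rewrite big1 // => i _.
rewrite big_bool /=; ring.
Qed.

Lemma sumWind i :
  \big[Rplus/0%R]_(b : {ffun 'I_d -> bool}) (Yweight p b * ind b i)%R = p.
Proof.
pose G (k : 'I_d) (x : bool) :=
  ((if x then p else 1 - p) * (if k == i then (if x then 1 else 0) else 1))%R.
transitivity (\big[Rplus/0%R]_(b : {ffun 'I_d -> bool}) \big[Rmult/1%R]_k G k (b k)).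
  apply: eq_bigr => b _; rewrite /G big_split /=; congr Rmult.
  rewrite (bigD1 i) //= eqxx big1 /ind; first by rewrite Rmult_1_r.
  by move=> k /negbTE ->.
rewrite -(bigA_distr_bigA G) (bigD1 i) //=.
have -> : \big[Rmult/1%R]_(k | k != i) \big[Rplus/0%R]_j G k j = 1%R.
  apply: big1 => k /negbTE hk; rewrite /G big_bool hk /=; ring.
rewrite /G big_bool eqxx /=; ring.
Qed.

Definition Ew (f : {ffun 'I_d -> bool} -> R) : R :=
  \big[Rplus/0%R]_(b : {ffun 'I_d -> bool}) (Yweight p b * f b)%R.

Lemma Ew_ext f g : (forall b, f b = g b) -> Ew f = Ew g.
Proof. by move=> H; apply: eq_bigr => b _; rewrite H. Qed.

Lemma Ew_mono f g : (forall b, (f b <= g b)%R) -> (Ew f <= Ew g)%R.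
Proof.
move=> H; apply: Rsum_le => b _; apply: Rmult_le_compat_l; [exact: W_ge0|exact: H].
Qed.

Lemma Ew_ge0 f : (forall b, (0 <= f b)%R) -> (0 <= Ew f)%R.
Proof. move=> H; apply: Rsum_ge0 => b _; apply: Rmult_le_pos; [exact: W_ge0|exact: H]. Qed.

Lemma Ew_scal a f : Ew (fun b => a * f b)%R = (a * Ew f)%R.
Proof.
rewrite /Ew big_distrr /=; apply: eq_bigr => b _; ring.
Qed.

Lemma Ew_add f g : Ew (fun b => f b + g b)%R = (Ew f + Ew g)%R.
Proof.
rewrite /Ew -big_split /=; apply: eq_bigr => b _; ring.
Qed.

Lemma Ew_const a : Ew (fun _ => a) = a.
Proof.
rewrite /Ew -big_distrl /= sumW; ring.
Qed.

Lemma Ew_ind i : Ew (fun b => ind b i) = p.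
Proof. exact: sumWind. Qed.

Lemma Ew_sum (F : 'I_d -> {ffun 'I_d -> bool} -> R) :
  Ew (fun b => \big[Rplus/0%R]_(i : 'I_d) F i b) = \big[Rplus/0%R]_(i : 'I_d) Ew (F i).
Proof.
rewrite /Ew (eq_bigr (fun b => \big[Rplus/0%R]_i (Yweight p b * F i b)%R)).
  by rewrite exchange_big.
by move=> b _; rewrite big_distrr.
Qed.

End Ew.

Lemma I2 {k : 'I_2} : k != ord0 -> k = ord_max.
Proof. case: k => [[|[|m]] Hm] // _; exact/val_inj. Qed.

Section Comb.
Variables (d l : nat) (N : R) (b0 b1 b2 : {ffun 'I_d -> bool}).
Hypotheses (hd : 0 < d) (hl : 0 < l) (hdvd : l %| d) (hN : (0 < N)%R).

Let c := d %/ l.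
Let ws := (fun k : 'I_2 => if k == class1 then Yvec N b1
                        else (fun i => m2 l i + Yvec N b2 i))%R.
Let w := Yvec N b0.

Lemma hc : 0 < c.
Proof. by rewrite /c divn_gt0 // dvdn_leq. Qed.

Lemma hdeq : d = c * l.
Proof. by rewrite /c divnK. Qed.

Lemma hdc : d %/ c = l.
Proof. by rewrite {1}hdeq mulKn // hc. Qed.

Definition allz (j : 'I_c) := forall i : 'I_d, i %/ l == j -> ~~ (b0 i || b1 i || b2 i).

Lemma notmin {j : 'I_c} {k} : allz j -> k != class1 ->
  k \notin block_minimizers c ws w j.
Proof.
move=> hz hk; rewrite inE; apply/negP => /forallP /(_ class1).
rewrite /Rleb; case: Rle_dec => // H _.
move: H; rewrite /block_dist hdc /ws eqxx (negbTE hk).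
have -> : \big[Rplus/0%R]_(i : 'I_d | i %/ l == j) ((w i - Yvec N b1 i)^2)%R = 0%R.
  apply: big1 => i hi; have := hz i hi; rewrite /w /Yvec.
  by case: (b0 i); case: (b1 i) => //= _; ring.
rewrite sqrt_0.
have hjl : j * l < d by rewrite hdeq ltn_pmul2r.
set S := (\big[Rplus/0%R]_(i | _) _).
suff : (1 <= S)%R.
  move=> h1 h2; have : (0 < sqrt S)%R by apply: sqrt_lt_R0; lra.
  lra.
rewrite /S (bigD1 (Ordinal hjl)) /=; last by rewrite mulnK.
have hj2 : (Ordinal hjl) %/ l == j by rewrite /= mulnK // eqxx.
have hz' := hz (Ordinal hjl) hj2.
move: hz' => /norP [/norP [h0 h1] h2].
have -> : w (Ordinal hjl) = 0%R by rewrite /w /Yvec (negbTE h0).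
have -> : Yvec N b2 (Ordinal hjl) = 0%R by rewrite /Yvec (negbTE h2).
rewrite /m2 /= modnMl eqxx.
set rest := \big[Rplus/0%R]_(i | _) _.
have : (0 <= rest)%R by apply: Rsum_ge0 => i _; apply: pow2_ge_0.
move=> h; lra.
Qed.

Definition badset : {set 'I_c} :=
  [set j : 'I_c | [exists i : 'I_d, (i %/ l == j) && (b0 i || b1 i || b2 i)]].

Lemma notbad_allz j : j \notin badset -> allz j.
Proof.
rewrite inE negb_exists => /forallP H i hi.
by have := H i; rewrite hi.
Qed.

Lemma probU_nz {u : {ffun 'I_c -> 'I_2}} : prob_U ws w u <> 0%R ->
  forall j, u j \in block_minimizers c ws w j.
Proof.
move=> H j; apply/negPn/negP => hj; apply: H.
by rewrite /prob_U (bigD1 j) //= (negbTE hj) Rmult_0_l.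
Qed.

Lemma votes_sum (u : {ffun 'I_c -> 'I_2}) : votes u ord0 + votes u ord_max = c.
Proof.
rewrite /votes.
have -> : [set j | u j == ord0] = ~: [set j | u j == ord_max].
  apply/setP => j; rewrite !inE.
  have [->|h] := eqVneq (u j) ord0 => //.
  by rewrite (I2 h) eqxx.
by rewrite addnC cardsC card_ord.
Qed.

Lemma votes_le {u : {ffun 'I_c -> 'I_2}} :
  (forall j, u j \in block_minimizers c ws w j) -> votes u ord_max <= #|badset|.
Proof.
move=> H; apply: subset_leq_card; apply/subsetP => j; rewrite inE => /eqP hj.
apply/negPn/negP => /notbad_allz hz.
by have := notmin (k := ord_max) hz isT; rewrite -hj H.
Qed.

Lemma chi_le1 (u : {ffun 'I_c -> 'I_2}) k : (0 <= prob_chi_given u k <= 1)%R.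
Proof.
rewrite /prob_chi_given; case: ifP => h; last lra.
split; first exact: Rinv_INR_ge0.
by apply: Rinv_INR_le1; rewrite card_gt0; apply/set0Pn; exists k.
Qed.

Lemma probU_ge0 (u : {ffun 'I_c -> 'I_2}) : (0 <= prob_U ws w u)%R.
Proof.
apply: Rprod_ge0 => j _; case: ifP => _; [exact: Rinv_INR_ge0|lra].
Qed.

Lemma inner_eq (u : {ffun 'I_c -> 'I_2}) :
  \big[Rplus/0%R]_(k | k != class1) prob_chi_given u k = prob_chi_given u ord_max.
Proof.
apply: big_pred1 => k /=; apply/idP/idP.
  by move/I2 => ->.
by move/eqP => ->.
Qed.

Lemma sumU_le1 : (\big[Rplus/0%R]_(u : {ffun 'I_c -> 'I_2}) prob_U ws w u <= 1)%R.
Proof.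
rewrite /prob_U -(bigA_distr_bigA (fun (j : 'I_c) (k : 'I_2) =>
   if k \in block_minimizers c ws w j
   then / INR #|block_minimizers c ws w j| else 0)%R).
apply: Rprod_le1 => j _.
rewrite -big_mkcond /= Rsum_const_in.
case: #|_| => [|n]; first by rewrite /= Rmult_0_l; lra.
rewrite Rinv_r; first lra.
apply: not_0_INR; lia.
Qed.

Lemma S_ge0 : (0 <= seg_misclass_prob c ws w class1)%R.
Proof.
apply: Rsum_ge0 => u _; rewrite inner_eq.
apply: Rmult_le_pos; [exact: probU_ge0| by case: (chi_le1 u ord_max)].
Qed.

Lemma S_le1 : (seg_misclass_prob c ws w class1 <= 1)%R.
Proof.
apply: Rle_trans sumU_le1; apply: Rsum_le => u _; rewrite inner_eq.
have := probU_ge0 u; have := chi_le1 u ord_max => h1 h2.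
rewrite -{2}(Rmult_1_r (prob_U ws w u)); apply: Rmult_le_compat_l; lra.
Qed.

Lemma S_zero : #|badset|.*2 < c -> seg_misclass_prob c ws w class1 = 0%R.
Proof.
move=> hB; apply: big1 => u _; rewrite inner_eq.
have [h|h] := Req_dec (prob_U ws w u) 0%R; first by rewrite h Rmult_0_l.
have H := probU_nz h; rewrite /prob_chi_given.
case: ifP => hm; last by rewrite Rmult_0_r.
exfalso; move: hm; rewrite inE => /forallP /(_ ord0) h0.
have := votes_sum u; have := votes_le H; move: hB h0; rewrite -addnn.
lia.
Qed.

Definition Tsum : R := \big[Rplus/0%R]_(i : 'I_d) (ind b0 i + ind b1 i + ind b2 i)%R.

Lemma bad_le_A : #|badset| <= #|[set i : 'I_d | b0 i || b1 i || b2 i]|.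
Proof.
pose j0 : 'I_c := Ordinal hc.
pose g (i : 'I_d) : 'I_c := insubd j0 (i %/ l).
apply: leq_trans (leq_imset_card g _).
apply: subset_leq_card; apply/subsetP => j; rewrite inE => /existsP [i /andP [/eqP hi hb]].
apply/imsetP; exists i; first by rewrite inE.
apply: val_inj; rewrite /g val_insubd hi ltn_ord //.
Qed.

Lemma bad_le_T : (INR #|badset| <= Tsum)%R.
Proof.
apply: Rle_trans (_ : INR #|[set i : 'I_d | b0 i || b1 i || b2 i]| <= Tsum)%R.
  by apply: le_INR; apply/leP; exact: bad_le_A.
rewrite -(Rmult_1_r (INR _)) -Rsum_const_in big_mkcond /=.
apply: Rsum_le => i _; rewrite inE /ind.
by case: (b0 i); case: (b1 i); case: (b2 i) => /=; lra.
Qed.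

Lemma Tsum_ge0 : (0 <= Tsum)%R.
Proof. apply: Rsum_ge0 => i _; rewrite /ind; by case: (b0 i); case: (b1 i); case: (b2 i); lra. Qed.

Lemma S_bound : (seg_misclass_prob c ws w class1 <= 2 / INR c * Tsum)%R.
Proof.
have hcR : (0 < INR c)%R by apply: lt_0_INR; apply/ltP; exact: hc.
have hT := Tsum_ge0.
have hpos : (0 <= 2 / INR c)%R by apply: Rle_mult_inv_pos; lra.
case: (ltnP #|badset|.*2 c) => hB.
  rewrite S_zero //; apply: Rmult_le_pos; lra.
apply: Rle_trans S_le1 _.
have hB' : (INR c <= 2 * INR #|badset|)%R.
  rewrite -(INR_IZR_INZ 2) -mult_INR; apply: le_INR; apply/leP; rewrite -muln2 mulnC in hB.
  by [].
have := bad_le_T.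
move=> h.
have e : (2 / INR c * Tsum * INR c = 2 * Tsum)%R by field; lra.
apply: (Rmult_le_reg_r (INR c)) => //; rewrite e; lra.
Qed.

End Comb.

Lemma triple_Ew d p (F : {ffun 'I_d -> bool} -> {ffun 'I_d -> bool} -> {ffun 'I_d -> bool} -> R) :
  \big[Rplus/0%R]_(b0 : {ffun 'I_d -> bool})
  \big[Rplus/0%R]_(b1 : {ffun 'I_d -> bool})
  \big[Rplus/0%R]_(b2 : {ffun 'I_d -> bool})
    (Yweight p b0 * Yweight p b1 * Yweight p b2 * F b0 b1 b2)%R =
  Ew d p (fun b0 => Ew d p (fun b1 => Ew d p (fun b2 => F b0 b1 b2))).
Proof.
rewrite /Ew; apply: eq_bigr => b0 _; rewrite big_distrr /=.
apply: eq_bigr => b1 _; rewrite big_distrr /= big_distrr /=.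
apply: eq_bigr => b2 _; ring.
Qed.

Lemma Rsum_const_ord n x : \big[Rplus/0%R]_(i < n) x = (INR n * x)%R.
Proof. by rewrite big_const_ord iter_Rplus. Qed.

Lemma nest_val d p (K : R) : (0 <= p <= 1)%R ->
  Ew d p (fun b0 => Ew d p (fun b1 => Ew d p (fun b2 =>
     K * \big[Rplus/0%R]_(i : 'I_d) (ind b0 i + ind b1 i + ind b2 i)))%R) =
  (K * (INR d * (3 * p)))%R.
Proof.
move=> hp.
transitivity (Ew d p (fun b0 => Ew d p (fun b1 =>
     K * \big[Rplus/0%R]_(i : 'I_d) (ind b0 i + ind b1 i + p)))%R).
  apply: Ew_ext => b0; apply: Ew_ext => b1.
  rewrite Ew_scal // Ew_sum //; congr Rmult; apply: eq_bigr => i _.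
  by rewrite Ew_add // Ew_const // Ew_ind.
transitivity (Ew d p (fun b0 =>
     K * \big[Rplus/0%R]_(i : 'I_d) (ind b0 i + p + p))%R).
  apply: Ew_ext => b0.
  rewrite Ew_scal // Ew_sum //; congr Rmult; apply: eq_bigr => i _.
  by rewrite Ew_add // Ew_add // !Ew_const // Ew_ind.
rewrite Ew_scal // Ew_sum //; congr Rmult.
rewrite (eq_bigr (fun _ => 3 * p)%R) ?Rsum_const_ord // => i _.
rewrite Ew_add // Ew_add // !Ew_const // Ew_ind //; ring.
Qed.

Theorem proposition4
  (d l : nat -> nat) (N p : nat -> R)
  (hd_pos : forall n, 0 < d n)
  (hd_inf : forall M : nat, exists n0, forall n, n0 <= n -> M <= d n)
  (hl_pos : forall n, 0 < l n)
  (hl_dvd : forall n, l n %| d n)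
  (hN : forall n, (0 < N n)%R)
  (hp : forall n, (0 < p n < 1)%R)
  (hl_inf : forall M : nat, exists n0, forall n, n0 <= n -> M <= l n)
  (hlp : Un_cv (fun n => INR (l n) * p n)%R 0%R) :
  Un_cv (fun n => modelB_misclass_prob (d n) (l n) (N n) (p n)) 0%R.
Proof.
have bound : forall n, (0 <= modelB_misclass_prob (d n) (l n) (N n) (p n)
                        <= 6 * (INR (l n) * p n))%R.
  move=> n; have hpn := hp n.
  have hp' : (0 <= p n <= 1)%R by lra.
  have hc : 0 < d n %/ l n by rewrite divn_gt0 // dvdn_leq.
  have hcR : (0 < INR (d n %/ l n))%R by apply: lt_0_INR; apply/ltP.
  have hdR : INR (d n) = (INR (d n %/ l n) * INR (l n))%R.
    rewrite -mult_INR; congr INR; symmetry; exact: divnK (hl_dvd n).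
  split.
    apply: Rsum_ge0 => b0 _; apply: Rsum_ge0 => b1 _; apply: Rsum_ge0 => b2 _.
    apply: Rmult_le_pos; last exact: S_ge0.
    by apply: Rmult_le_pos; [apply: Rmult_le_pos|]; apply: W_ge0.
  rewrite /modelB_misclass_prob.
  apply: Rle_trans.
    apply: Rsum_le => b0 _; apply: Rsum_le => b1 _; apply: Rsum_le => b2 _.
    apply: Rmult_le_compat_l.
      by apply: Rmult_le_pos; [apply: Rmult_le_pos|]; apply: W_ge0.
    exact: (@S_bound (d n) (l n) (N n) b0 b1 b2 (hd_pos n) (hl_pos n) (hl_dvd n)).
  rewrite (triple_Ew (d n) (p n) (fun b0 b1 b2 => 2 / INR (d n %/ l n) * Tsum (d n) b0 b1 b2)%R).
  rewrite /Tsum nest_val // hdR.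
  right; field; lra.
move=> eps heps.
have [M HM] := hlp (eps / 6)%R ltac:(lra).
exists M => n hn.
have := HM n hn; rewrite /R_dist !Rminus_0_r.
have := bound n; have := hp n.
have hl0 : (0 <= INR (l n))%R by apply: pos_INR.
move=> hpn hb h.
rewrite Rabs_pos_eq in h; last by apply: Rmult_le_pos; lra.
rewrite Rabs_pos_eq; lra.
Qed.
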